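(* Let $\ell$ be an odd integer with $\ell\equiv 3$ or $5 \pmod 8$, and let $t$ be a positive even integer. Let $G$ be the graph obtained from a cycle $C_\ell$ of length $\ell$ by attaching a path of length $t$ (i.e. with $t$ edges and $t$ new vertices) at one vertex of the cycle, so that one end of the path is identified with a cycle vertex. Then $G$ has $\ell+t$ vertices and $\mathrm{GP}(G)$ is not an integer.
   Context: All graphs are simple and finite. For a connected graph $G$, $d_G(u,v)$ denotes the shortest-path distance and $\mathrm{Aut}(G)$ the automorphism group. The Graovac-Pisanski index is $$\mathrm{GP}(G)=\frac{|V(G)|}{2|\mathrm{Aut}(G)|}\sum_{u\in V(G)}\sum_{\alpha\in \mathrm{Aut}(G)} d_G(u,\alpha(u)).$$ *)

(* Defs.v *)
From HB Require Import structures.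
From mathcomp Require Import all_boot all_order all_algebra all_fingroup.
Set Implicit Arguments. Unset Strict Implicit. Unset Printing Implicit Defensive.
Import Order.TTheory GRing.Theory Num.Theory.

(* A simple graph on a finite vertex type T is a (symmetric, irreflexive)
   adjacency relation e : rel T. *)

Fixpoint within (T : finType) (e : rel T) (k : nat) (u v : T) : bool :=
  match k with
  | 0 => u == v
  | k'.+1 => within e k' u v || [exists w, within e k' u w && e w v]
  end.

(* Shortest-path distance: least k with a walk of length <= k from u to v.
   (For connected graphs this is found among k < #|T|.) *)
Definition dist (T : finType) (e : rel T) (u v : T) : nat :=
  find (fun k => within e k u v) (iota 0 #|T|).

Definition graphAut (T : finType) (e : rel T) : {set {perm T}} :=
  [set s : {perm T} | [forall x, forall y, e (s x) (s y) == e x y]].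

Definition GP (T : finType) (e : rel T) : rat :=
  ((#|T|%:R / (2 * #|graphAut e|)%N%:R) *
   (\sum_(u : T) \sum_(a in graphAut e) dist e u (a u))%N%:R)%R.

(* The graph obtained from C_l (vertices 0..l-1) by attaching a path with t
   edges and new vertices l, ..., l+t-1 at cycle vertex 0:
   path 0 - l - (l+1) - ... - (l+t-1). *)
Definition cyc_step (l : nat) (i j : nat) : bool :=
  [&& i < l, j < l & j == i.+1 %% l].
Definition path_step (l : nat) (i j : nat) : bool :=
  ((i == 0) && (j == l)) || ((l <= i) && (j == i.+1)).
Definition cycle_path_adj (l t : nat) : rel 'I_(l + t) :=
  fun i j => [|| cyc_step l i j, cyc_step l j i, path_step l i j
              | path_step l j i].
Arguments cycle_path_adj : clear implicits.

(* Main.v *)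
Require Import Defs.
From HB Require Import structures.
From mathcomp Require Import all_boot all_order all_algebra all_fingroup zify.
Import Order.TTheory GRing.Theory Num.Theory.

Definition adjN (l x y : nat) : bool :=
  [|| [&& x < l, y < l & ((y == x.+1) || (x == y.+1))],
      (x == 0) && (y.+1 == l), (y == 0) && (x.+1 == l),
      (x == 0) && (y == l), (y == 0) && (x == l),
      (l <= x) && (y == x.+1) | (l <= y) && (x == y.+1)].

Lemma cyc_stepE l i j : cyc_step l i j =
  [&& i < l, j < l & (if i.+1 == l then j == 0 else j == i.+1)].
Proof.
rewrite /cyc_step; case Hi: (i < l) => //=; case: (i.+1 =P l) => [->|ne].
  by rewrite modnn.
by rewrite modn_small //; lia.
Qed.

Lemma adjE l t (x y : 'I_(l + t)) : 0 < l ->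
  cycle_path_adj l t x y = adjN l x y.
Proof.
move=> l0; rewrite /cycle_path_adj !cyc_stepE /path_step /adjN.
by do 2 case: ifP => ? ; lia.
Qed.

Lemma within_snoc (T : finType) (e : rel T) k u w v :
  within e k u w -> e w v -> within e k.+1 u v.
Proof. by move=> H1 H2 /=; apply/orP; right; apply/existsP; exists w; rewrite H1 H2. Qed.

Lemma within_cat (T : finType) (e : rel T) a b u w v :
  within e a u w -> within e b w v -> within e (a + b) u v.
Proof.
move=> Ha; elim: b v => [|b IH] v /=; first by move/eqP <-; rewrite addn0.
case/orP => [H|/existsP[w' /andP[H1 H2]]].
  by rewrite addnS /= IH.
by rewrite addnS; apply: within_snoc H2; apply: IH.
Qed.

Lemma within_lb (T : finType) (e : rel T) (f : T -> nat) u :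
  f u = 0 -> (forall w v, e w v -> f v <= (f w).+1) ->
  forall k v, within e k u v -> f v <= k.
Proof.
move=> f0 Lip; elim=> [|k IH] v /=; first by move/eqP <-; rewrite f0.
case/orP => [H|/existsP[w /andP[H1 H2]]]; first by have := IH _ H; lia.
by have := IH _ H1; have := Lip _ _ H2; lia.
Qed.

Lemma find_iota_eq (p : pred nat) D n :
  (forall k, k < D -> ~~ p k) -> p D -> D < n -> find p (iota 0 n) = D.
Proof.
move=> Hlt HD.
suff: forall a, a <= D -> D < a + n -> find p (iota a n) = D - a.
  by move=> H Dn; rewrite H ?subn0.
elim: n => [|n IH] a aD Dn /=; first by lia.
case: (ltnP a D) => aD'.
  by rewrite (negbTE (Hlt _ aD')) IH //; lia.
have -> : a = D by lia.
by rewrite HD subnn.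
Qed.

Definition cd (l i j : nat) := minn (i - j + (j - i)) (l - (i - j + (j - i))).
Definition Fd (l u v : nat) :=
  cd l u (if v < l then v else 0) + (if v < l then 0 else v - l + 1).

Lemma Fd_lip l u w v : 0 < l -> u < l -> adjN l w v -> Fd l u v <= (Fd l u w).+1.
Proof. move=> l0 ul; rewrite /Fd /cd /adjN; do 2 case: ifP => ?; lia. Qed.

Lemma walk_up l t d (x y : 'I_(l + t)) : 0 < l ->
  nat_of_ord y = nat_of_ord x + d -> nat_of_ord y < l -> within (cycle_path_adj l t) d x y.
Proof.
move=> l0; elim: d y => [|d IH] y Hy Hyl.
  by rewrite /= ; apply/eqP/val_inj; rewrite /= Hy addn0.
have Hz : (nat_of_ord y).-1 < l + t by lia.
apply: (@within_snoc _ _ _ _ (Ordinal Hz)).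
  by apply: IH => /=; lia.
by rewrite adjE //= /adjN; lia.
Qed.

Lemma walk_down l t d (x y : 'I_(l + t)) : 0 < l ->
  nat_of_ord x = nat_of_ord y + d -> nat_of_ord x < l -> within (cycle_path_adj l t) d x y.
Proof.
move=> l0; elim: d y => [|d IH] y Hy Hxl.
  by rewrite /= ; apply/eqP/val_inj; rewrite /= Hy addn0.
have Hz : (nat_of_ord y).+1 < l + t by lia.
apply: (@within_snoc _ _ _ _ (Ordinal Hz)).
  by apply: IH => /=; lia.
by rewrite adjE //= /adjN; lia.
Qed.

Lemma walk_cd l t (u w : 'I_(l + t)) : 0 < l -> nat_of_ord u < l -> nat_of_ord w < l ->
  within (cycle_path_adj l t) (cd l u w) u w.
Proof.
move=> l0 ul wl.
have H0 : 0 < l + t by lia.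
have H1 : l.-1 < l + t by lia.
pose z := Ordinal H0; pose m := Ordinal H1.
have ezm : cycle_path_adj l t z m by rewrite adjE //= /adjN; lia.
have emz : cycle_path_adj l t m z by rewrite adjE //= /adjN; lia.
case: (leqP (nat_of_ord u) (nat_of_ord w)) => uw.
  case: (leqP (nat_of_ord w - nat_of_ord u) (l - (nat_of_ord w - nat_of_ord u))) => hh.
    have -> : cd l u w = nat_of_ord w - nat_of_ord u by rewrite /cd; lia.
    by apply: walk_up => //; lia.
  have -> : cd l u w = (nat_of_ord u + 1) + (l.-1 - nat_of_ord w) by rewrite /cd; lia.
  apply: (@within_cat _ _ _ _ _ m); last by apply: walk_down => //=; lia.
  rewrite addn1; apply: (@within_snoc _ _ _ _ z) => //.
  by apply: walk_down => //=; lia.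
case: (leqP (nat_of_ord u - nat_of_ord w) (l - (nat_of_ord u - nat_of_ord w))) => hh.
  have -> : cd l u w = nat_of_ord u - nat_of_ord w by rewrite /cd; lia.
  by apply: walk_down => //; lia.
have -> : cd l u w = (l.-1 - nat_of_ord u + 1) + nat_of_ord w by rewrite /cd; lia.
apply: (@within_cat _ _ _ _ _ z); last by apply: walk_up => //=; lia.
rewrite addn1; apply: (@within_snoc _ _ _ _ m) => //.
by apply: walk_up => //=; lia.
Qed.

Lemma dist_cd l t (u w : 'I_(l + t)) : 0 < l -> nat_of_ord u < l -> nat_of_ord w < l ->
  dist (cycle_path_adj l t) u w = cd l u w.
Proof.
move=> l0 ul wl; rewrite /dist card_ord.
apply: find_iota_eq; last 2 first.
- exact: walk_cd.
- by rewrite /cd; lia.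
move=> k kl; apply/negP => Hw.
have := @within_lb _ (cycle_path_adj l t) (fun v => Fd l u v) u.
move=> /(_ _ _ k w Hw).
have -> : Fd l u w = cd l u w by rewrite /Fd wl addn0.
move=> H; suff : cd l u w <= k by lia.
apply: H; first by rewrite /Fd ul /cd; lia.
by move=> a b; rewrite adjE // => /Fd_lip; apply.
Qed.

Lemma dist_refl (T : finType) (e : rel T) u : dist e u u = 0.
Proof.
rewrite /dist; case: #|T| (max_card (pred1 u)) => [|n] //=.
by rewrite eqxx.
Qed.

Lemma autP (T : finType) (e : rel T) (s : {perm T}) :
  s \in graphAut e -> forall x y, e (s x) (s y) = e x y.
Proof. by rewrite inE => /forallP H x y; have /forallP /(_ y) /eqP := H x. Qed.

Arguments autP {T e s}.

Lemma autI (T : finType) (e : rel T) (s : {perm T}) :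
  (forall x y, e (s x) (s y) = e x y) -> s \in graphAut e.
Proof. by move=> H; rewrite inE; apply/forallP => x; apply/forallP => y; rewrite H. Qed.

Arguments autI {T e s}.

Lemma aut_mul (T : finType) (e : rel T) (s r : {perm T}) :
  s \in graphAut e -> r \in graphAut e -> (s * r)%g \in graphAut e.
Proof.
by move=> /autP Hs /autP Hr; apply: autI => x y; rewrite !permM Hr Hs.
Qed.

Arguments aut_mul {T e s r}.

Definition fixv l t (r : {perm 'I_(l + t)}) k :=
  forall x : 'I_(l + t), nat_of_ord x = k -> nat_of_ord (r x) = k.
Arguments fixv {l t}.

Lemma fix_step l t (r : {perm 'I_(l + t)}) a b c : 0 < l ->
  r \in graphAut (cycle_path_adj l t) ->
  a < l + t -> fixv r a -> (b = c \/ (b < l + t /\ fixv r b)) ->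
  (forall y, y < l + t -> adjN l a y -> y = b \/ y = c) ->
  adjN l a c -> fixv r c.
Proof.
move=> l0 rA al Ha Hb Hnb Hac x xc.
pose xa := Ordinal al.
have := autP rA xa x; rewrite !adjE //= xc Hac (Ha xa) //.
case/(Hnb _ (ltn_ord _)) => // rxb.
case: Hb => [<- //|[bl Hb]].
pose xb := Ordinal bl.
have : r x = r xb by apply: ord_inj; rewrite /= rxb (Hb xb).
by move/perm_inj => exb; rewrite rxb -xc exb.
Qed.

Definition nb1 l k := if k == 0 then 1 else if k < l then k.-1 else k.+1.
Definition nb2 l k := if k == 0 then l else if k < l then
   (if k.+1 == l then 0 else k.+1) else if k == l then 0 else k.-1.

Lemma fix_last l t (r : {perm 'I_(l + t)}) : 3 <= l -> 2 <= t ->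
  r \in graphAut (cycle_path_adj l t) -> fixv r (l + t).-1.
Proof.
move=> l3 t2 rA x xv.
have lt : (l + t).-1 < l + t by lia.
pose y := (r^-1)%g (Ordinal lt).
suff yv : nat_of_ord y = (l + t).-1.
  have -> : x = y by apply: val_inj; rewrite /= xv yv.
  by rewrite /y permKV.
apply/eqP; apply/negPn/negP => yne.
have H1 : nb1 l y < l + t by rewrite /nb1; have := ltn_ord y; repeat case: ifP => ?; lia.
have H2 : nb2 l y < l + t by rewrite /nb2; have := ltn_ord y; repeat case: ifP => ?; lia.
pose p := Ordinal H1; pose q := Ordinal H2.
have Ap : adjN l y p by rewrite /= /nb1 /adjN; have := ltn_ord y; repeat case: ifP => ?; lia.
have Aq : adjN l y q by rewrite /= /nb2 /adjN; have := ltn_ord y; repeat case: ifP => ?; lia.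
have pq : nat_of_ord p != nat_of_ord q by rewrite /= /nb1 /nb2; have := ltn_ord y; repeat case: ifP => ?; lia.
have := autP rA y p; have := autP rA y q.
rewrite !adjE; try lia. rewrite Ap Aq /y permKV /= => Eq Ep.
have : r p = r q.
  apply: ord_inj; have := ltn_ord (r p); have := ltn_ord (r q).
  move: Ep Eq; rewrite /adjN; lia.
move/perm_inj => pq'; move: pq; by rewrite pq' eqxx.
Qed.

Definition vk l k := if k == 0 then 0 else l + k - 1.

Lemma nb_mid l a y : 3 <= l -> l < a -> adjN l a y -> y = a.+1 \/ y = a.-1.
Proof. rewrite /adjN; lia. Qed.

Lemma nb_l l y : 3 <= l -> adjN l l y -> y = l.+1 \/ y = 0.
Proof. rewrite /adjN; lia. Qed.

Lemma adj_dn l a : l <= a -> adjN l a.+1 a.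
Proof. by move=> la; rewrite /adjN la !eqxx /= ?orbT. Qed.

Lemma adj_l0 l : adjN l l 0.
Proof. by rewrite /adjN !eqxx /= ?orbT. Qed.

Lemma fix_path l t (r : {perm 'I_(l + t)}) : 3 <= l -> 2 <= t ->
  r \in graphAut (cycle_path_adj l t) -> forall k, k <= t -> fixv r (vk l k).
Proof.
move=> l3 t2 rA.
have l0 : 0 < l by lia.
have Hend := fix_last l t r l3 t2 rA.
have H : forall j, j <= t.-2 -> fixv r ((l + t).-1 - j) /\ fixv r ((l + t).-2 - j).
  elim=> [|j IH] jt.
    rewrite !subn0; split => //.
    apply: (@fix_step _ _ r ((l + t).-1) ((l + t).-2) ((l + t).-2)) => //.
    - lia.
    - by left.
    - have ha : l < (l + t).-1 by lia.
      move=> y yl /(nb_mid _ _ _ l3 ha) [|->]; [lia | by left].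
    - have -> : (l + t).-1 = ((l + t).-2).+1 by lia.
      by apply: adj_dn; lia.
  have [IH1 IH2] := IH ltac:(lia).
  split; first by have -> : (l + t).-1 - j.+1 = (l + t).-2 - j by lia.
  apply: (@fix_step _ _ r ((l + t).-2 - j) ((l + t).-1 - j) ((l + t).-2 - j.+1)) => //.
  - lia.
  - by right; split => //; lia.
  - have ha : l < (l + t).-2 - j by lia.
    move=> y yl /(nb_mid _ _ _ l3 ha) [->|->]; [left | right]; lia.
  - have -> : (l + t).-2 - j = ((l + t).-2 - j.+1).+1 by lia.
    by apply: adj_dn; lia.
have [Hl1 Hl] := H t.-2 (leqnn _).
have E1 : (l + t).-1 - t.-2 = l.+1 by lia.
have E2 : (l + t).-2 - t.-2 = l by lia.
rewrite E1 in Hl1; rewrite E2 in Hl.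
move=> k kt; case: (posnP k) => [->|kp].
  apply: (@fix_step _ _ r l l.+1 0) => //.
  - lia.
  - by right; split => //; lia.
  - by move=> y yl /(nb_l _ _ l3).
  - exact: adj_l0.
have -> : vk l k = (l + t).-1 - (t - k).
  rewrite /vk; have -> : (k == 0) = false by lia.
  lia.
case: (posnP (t - k)) => [->|tk]; first by rewrite subn0.
have [] := H (t - k).-1 ltac:(lia).
by have -> : (l + t).-2 - (t - k).-1 = (l + t).-1 - (t - k) by lia.
Qed.

Lemma fix_cycle l t (r : {perm 'I_(l + t)}) : 3 <= l -> 2 <= t ->
  r \in graphAut (cycle_path_adj l t) -> fixv r 1 -> r = 1%g.
Proof.
move=> l3 t2 rA r1.
have l0 : 0 < l by lia.
have Hp := fix_path l t r l3 t2 rA.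
have f0 : fixv r 0 by apply: (Hp 0).
have C : forall i, 0 < i -> i < l -> fixv r i.-1 /\ fixv r i.
  elim=> [//|i IH] _ il.
  case: (posnP i) => [->|ip]; first by split.
  have [IH1 IH2] := IH ip ltac:(lia).
  split => //.
  apply: (@fix_step _ _ r i i.-1 i.+1) => //.
  - by lia.
  - by right; split => //; lia.
  - by move=> y yl; rewrite /adjN; lia.
  - by rewrite /adjN; lia.
apply/permP => x; rewrite perm1; apply: ord_inj.
case: (ltnP x l) => xl.
  case: (posnP x) => [x0|xp]; first by rewrite (f0 x).
  by have [_ H] := C x xp xl; apply: H.
have := Hp (x - l + 1) ltac:(have := ltn_ord x; lia).
have -> : vk l (x - l + 1) = x by rewrite /vk; case: ifP; lia.
by apply.
Qed.

Lemma one_cases l t (r : {perm 'I_(l + t)}) (x1 : 'I_(l + t)) : 3 <= l -> 2 <= t ->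
  r \in graphAut (cycle_path_adj l t) -> nat_of_ord x1 = 1 ->
  nat_of_ord (r x1) = 1 \/ nat_of_ord (r x1) = l.-1.
Proof.
move=> l3 t2 rA x11.
have l0 : 0 < l by lia.
have Hp := fix_path l t r l3 t2 rA.
have H0 : 0 < l + t by lia.
have Hl : l < l + t by lia.
pose x0 := Ordinal H0; pose xl := Ordinal Hl.
have f0 : nat_of_ord (r x0) = 0 by apply: (Hp 0).
have fl : nat_of_ord (r xl) = l.
  have := Hp 1 ltac:(lia); have -> : vk l 1 = l by rewrite /vk /=; lia.
  by apply.
have := autP rA x0 x1; rewrite !adjE // f0 x11 /= /adjN.
move=> H.
have : nat_of_ord (r x1) != l.
  apply/eqP => E; have : r x1 = r xl by apply: ord_inj; rewrite E fl.
  by move/perm_inj => E'; move: x11; rewrite E' /=; lia.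
lia.
Qed.

Definition sv l k := if k == 0 then 0 else if k < l then l - k else k.

Lemma sv_lt l t (x : 'I_(l + t)) : sv l x < l + t.
Proof. by rewrite /sv; have := ltn_ord x; repeat case: ifP => ?; lia. Qed.

Lemma svK l k : sv l (sv l k) = k.
Proof.
rewrite /sv; case: (eqVneq k 0) => [->|k0] //=.
rewrite ?(negbTE k0); case: (ltnP k l) => kl /=.
  have -> : (l - k == 0) = false by lia.
  have -> : (l - k < l) = true by lia.
  lia.
by rewrite ?(negbTE k0) ?ltnNge ?kl.
Qed.

Definition sigf l t (x : 'I_(l + t)) : 'I_(l + t) := Ordinal (sv_lt l t x).

Lemma sigfK l t : involutive (sigf l t).
Proof. by move=> x; apply: ord_inj; rewrite /sigf /= svK. Qed.

Definition sgm l t : {perm 'I_(l + t)} := perm (inv_inj (sigfK l t)).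

Lemma sigE l t x : nat_of_ord (sgm l t x) = sv l x.
Proof. by rewrite permE. Qed.

Lemma sigK l t x : sgm l t (sgm l t x) = x.
Proof. by rewrite !permE sigfK. Qed.

Lemma cyc_sv l x y : cyc_step l (sv l x) (sv l y) = cyc_step l y x.
Proof. rewrite !cyc_stepE /sv; repeat case: ifP => ?; lia. Qed.

Lemma path_sv l x y : 0 < l -> path_step l (sv l x) (sv l y) = path_step l x y.
Proof. move=> l0; rewrite /path_step /sv; repeat case: ifP => ?; lia. Qed.

Lemma sig_aut l t : 0 < l -> sgm l t \in graphAut (cycle_path_adj l t).
Proof.
move=> l0; apply: autI => x y; rewrite /cycle_path_adj !sigE !cyc_sv !path_sv //.
by case: (cyc_step l x y); case: (cyc_step l y x).
Qed.

Lemma autE l t : 3 <= l -> 2 <= t ->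
  graphAut (cycle_path_adj l t) = [set 1%g; sgm l t].
Proof.
move=> l3 t2; have l0 : 0 < l by lia.
apply/setP => s; rewrite in_set2; apply/idP/idP.
  move=> sA; have H1 : 1 < l + t by lia.
  pose x1 := Ordinal H1.
  case: (one_cases l t s x1 l3 t2 sA erefl) => H.
    rewrite (fix_cycle l t s l3 t2 sA) ?eqxx //.
    by move=> x xv; have -> : x = x1 by apply: ord_inj.
  have E : (s * sgm l t)%g = 1%g.
    apply: fix_cycle => //; first by apply: aut_mul => //; exact: sig_aut.
    move=> x xv; have -> : x = x1 by apply: ord_inj.
    rewrite permM sigE H /sv; have -> : (l.-1 == 0) = false by lia.
    have -> : l.-1 < l by lia.
    lia.
  apply/orP; right; apply/eqP/permP => x.
  have := congr1 (fun p : {perm _} => p x) E; rewrite permM perm1.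
  by move=> E'; rewrite -{2}E' sigK.
case/orP => /eqP ->; last exact: sig_aut.
by apply: autI => x y; rewrite !perm1.
Qed.

Lemma sig_neq1 l t : 3 <= l -> 2 <= t -> (1%g != sgm l t).
Proof.
move=> l3 t2; have H1 : 1 < l + t by lia.
apply/eqP => /(congr1 (fun p : {perm _} => nat_of_ord (p (Ordinal H1)))).
rewrite perm1 sigE /= /sv /=.
have -> : 1 < l by lia.
lia.
Qed.

Lemma mod2 l i : i < l -> (2 * i) %% l = if 2 * i < l then 2 * i else 2 * i - l.
Proof.
move=> il; case: ifP => h; first by rewrite modn_small.
have -> : 2 * i = (2 * i - l) + l by lia.
by rewrite modnDr modn_small; lia.
Qed.

Lemma cd_sv l i : odd l -> i < l ->
  cd l i (sv l i) = minn ((2 * i) %% l) (l - (2 * i) %% l).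
Proof.
move=> lo il; have := odd_double_half l; rewrite lo => hl.
rewrite mod2 // /sv /cd; repeat case: ifP => ?; lia.
Qed.

Lemma hsum m : (\sum_(k < (m.*2).+1) minn k ((m.*2).+1 - k))%N = m * m.+1.
Proof.
elim: m => [|m IH]; first by rewrite big_ord_recl big_ord0.
rewrite doubleS big_ord_recl big_ord_recr /=.
rewrite (eq_bigr (fun i : 'I_(m.*2).+1 => minn i ((m.*2).+1 - i) + 1)).
  by rewrite big_split /= IH sum1_card card_ord /bump /=; nia.
move=> i _; rewrite /bump /=; have := ltn_ord i; lia.
Qed.

Lemma sum_phi l : odd l ->
  (\sum_(i < l) cd l i (sv l i))%N = l./2 * (l./2).+1.
Proof.
move=> lo; have := odd_double_half l; rewrite lo => hl.
have l0 : 0 < l by lia.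
rewrite (eq_bigr (fun i : 'I_l => minn ((2 * i) %% l) (l - (2 * i) %% l))); last first.
  by move=> i _; apply: cd_sv.
pose h (i : 'I_l) : 'I_l := Ordinal (ltn_pmod (2 * i) l0).
have hinj : injective h.
  move=> i j /(congr1 (@nat_of_ord _)) /=; rewrite !mod2 //.
  move=> E; apply: ord_inj; move: E; have := ltn_ord i; have := ltn_ord j.
  by repeat case: ifP => ?; lia.
rewrite -(hsum (l./2)).
have -> : (l./2).*2.+1 = l by lia.
by rewrite [RHS](reindex_inj hinj); apply: eq_bigr.
Qed.

Lemma sumS l t : 3 <= l -> 2 <= t -> odd l ->
  (\sum_(u : 'I_(l + t)) \sum_(a in graphAut (cycle_path_adj l t))
      dist (cycle_path_adj l t) u (a u))%N = l./2 * (l./2).+1.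
Proof.
move=> l3 t2 lo; have l0 : 0 < l by lia.
rewrite autE //.
have n1 : (1%g : {perm 'I_(l + t)}) \notin [set sgm l t].
  by rewrite in_set1; apply: sig_neq1.
rewrite (eq_bigr (fun u => dist (cycle_path_adj l t) u (sgm l t u))); last first.
  by move=> u _; rewrite big_setU1 //= big_set1 perm1 dist_refl.
rewrite big_split_ord /=.
rewrite [X in _ + X]big1 ?addn0; last first.
  move=> i _; have -> : sgm l t (rshift l i) = rshift l i.
    by apply: ord_inj; rewrite sigE /sv /=; repeat case: ifP => ?; lia.
  exact: dist_refl.
rewrite -sum_phi //; apply: eq_bigr => i _.
rewrite dist_cd //= ?sigE //.
by rewrite /sv; have := ltn_ord i; repeat case: ifP => ?; lia.
Qed.

Lemma N4 l t : odd l -> (l %% 8 = 3 \/ l %% 8 = 5) -> ~~ odd t ->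
  ((l + t) * (l./2 * (l./2).+1)) %% 4 = 2.
Proof.
move=> lo l8 te.
have := odd_double_half l; rewrite lo => hl.
have := odd_double_half t; rewrite (negbTE te) => ht.
have Ha : (l + t) %% 4 = 1 \/ (l + t) %% 4 = 3 by lia.
have Hb : (l./2 %% 4 = 1 /\ (l./2).+1 %% 4 = 2) \/ (l./2 %% 4 = 2 /\ (l./2).+1 %% 4 = 3) by lia.
rewrite -modnMm -(modnMm (l./2)).
by case: Ha => ->; case: Hb => [[-> ->]|[-> ->]].
Qed.

Theorem theorem4p1 (l t : nat) :
  odd l -> (l %% 8 = 3 \/ l %% 8 = 5) -> 0 < t -> ~~ odd t ->
  #|'I_(l + t)| = l + t /\ GP (cycle_path_adj l t) \notin Num.int.
Proof.
move=> lo l8 t0 te; split; first exact: card_ord.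
have l3 : 3 <= l by lia.
have t2 : 2 <= t.
  have := odd_double_half t; rewrite (negbTE te); lia.
have HN := N4 l t lo l8 te.
rewrite /GP card_ord sumS // autE // cards2 sig_neq1 //.
apply/negP => /intrP [z Hz].
have : ((((l + t) * (l./2 * (l./2).+1))%N)%:R = (z * 4)%:~R :> rat)%R.
  rewrite intrM -Hz natrM -pmulrn.
  have -> : (2 * true.+1)%N = 4 by [].
  by rewrite mulrAC divfK // pnatr_eq0.
rewrite pmulrn => /intr_inj; lia.
Qed.
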